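(* Let $\mathbb F$ be a field and let $(S_1,m_1),\dots,(S_n,m_n)$ be finite multisets in $\mathbb F$ such that $0\in S_i$ and $m_i(0)=1$ for every $i$. Put $S=S_1\times\dots\times S_n$ and $d(S_i)=\sum_{s\in S_i}m_i(s)$. Let $H_1,\dots,H_k$ be hyperplanes in $\mathbb F^n$ such that every point $\mathbf s\in S\setminus\{\mathbf 0\}$ is contained in at least $|m(\mathbf s)|-n+1$ of the hyperplanes $H_1,\dots,H_k$, and $\mathbf 0$ is contained in none of them. Then $k\ge d(S_1)+\dots+d(S_n)-n$.
   Context: A multiset $(S_i,m_i)$ consists of a nonempty finite subset $S_i\subseteq\mathbb F$ and multiplicities $m_i:S_i\to\{1,2,\dots\}$. For $\mathbf s=(s_1,\dots,s_n)\in S$, $|m(\mathbf s)|=m_1(s_1)+\dots+m_n(s_n)$. A hyperplane in $\mathbb F^n$ is the zero set of a polynomial $a_1x_1+\dots+a_nx_n-b$ with $a_i,b\in\mathbb F$, not all $a_i$ zero. *)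

(* Defs.v *)
From mathcomp Require Import all_boot all_order all_algebra.
Set Implicit Arguments. Unset Strict Implicit. Unset Printing Implicit Defensive.
Import GRing.Theory.
Local Open Scope ring_scope.

(* A hyperplane in F^n is given by (a, b) with a : F^n (a row vector) nonzero; its zero set
   is { x | sum_i a_i x_i - b = 0 }. *)
Definition hyperplane (F : fieldType) (n : nat) := ('rV[F]_n * F)%type.

Definition is_hyperplane (F : fieldType) (n : nat) (H : hyperplane F n) : Prop :=
  exists i : 'I_n, H.1 ord0 i != 0.

Definition on_hyperplane (F : fieldType) (n : nat) (H : hyperplane F n)
  (x : 'I_n -> F) : bool :=
  \sum_(i < n) H.1 ord0 i * x i - H.2 == 0.

Definition num_containing (F : fieldType) (n : nat) (Hs : seq (hyperplane F n))
  (x : 'I_n -> F) : nat :=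
  count (fun H => on_hyperplane H x) Hs.

Definition msum (F : fieldType) (n : nat) (m : 'I_n -> F -> nat) (x : 'I_n -> F) : nat :=
  (\sum_(i < n) m i (x i))%N.

Definition dmult (F : fieldType) (Si : seq F) (mi : F -> nat) : nat :=
  (\sum_(s <- Si) mi s)%N.

(* Main.v *)
Require Import Defs.
From mathcomp Require Import all_boot all_order all_algebra.
From mathcomp Require Import mpoly zify.
Local Open Scope ring_scope.
Import GRing.Theory.

Module Aux.
Set Implicit Arguments. Unset Strict Implicit. Unset Printing Implicit Defensive.
Section Uni.
Variable F : fieldType.

Definition shc (s : F) (a : nat) (p : {poly F}) := (p \Po ('X + s%:P))`_a.

Lemma XsubC_comp (s : F) : ('X - s%:P) \Po ('X + s%:P) = 'X.
Proof. by rewrite comp_polyB comp_polyX comp_polyC addrK. Qed.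

Lemma shc_dvd s m p a : (('X - s%:P) ^+ m %| p) -> (a < m)%N -> shc s a p = 0.
Proof.
move=> /dvdpP [q ->] am; rewrite /shc comp_polyM rmorphXn /= XsubC_comp.
by rewrite coefMXn am.
Qed.

Lemma shc_dvdP s m p : (forall a, (a < m)%N -> shc s a p = 0) ->
  ('X - s%:P) ^+ m %| p.
Proof.
move=> H; set q := p \Po ('X + s%:P).
have Eq : q = (\poly_(i < size q) q`_(i + m)) * 'X^m.
  apply/polyP => i; rewrite coefMXn; case: ltnP => im; first by rewrite -[q`_i]/(shc s i p) H.
  rewrite coef_poly subnK //; case: ltnP => // qi.
  by rewrite nth_default // (leq_trans qi) // leq_subr.
apply/dvdpP; exists ((\poly_(i < size q) q`_(i + m)) \Po ('X - s%:P)).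
by rewrite -comp_Xn_poly -comp_polyM -Eq /q comp_polyXaddC_K.
Qed.

Lemma inj_uni (S : seq F) (m : F -> nat) (p : {poly F}) : uniq S ->
  (size p <= \sum_(s <- S) m s)%N ->
  (forall s, s \in S -> forall a, (a < m s)%N -> shc s a p = 0) -> p = 0.
Proof.
elim: S p => [|s0 S IH] p /=.
  by move=> _; rewrite big_nil leqn0 size_poly_eq0 => /eqP.
move=> /andP [s0S uS]; rewrite big_cons => sz H.
have := shc_dvdP (H s0 (mem_head _ _)) => /dvdpP [r pE].
have [r0E|r0] := eqVneq r 0; first by rewrite pE r0E mul0r.
have Xn0 : ('X - s0%:P) ^+ m s0 != 0.
  by rewrite -size_poly_eq0 size_exp_XsubC.
have szr : (size r <= \sum_(s <- S) m s)%N.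
  move: sz; rewrite pE size_mul // size_exp_XsubC addnS /=.
  by rewrite addnC leq_add2l.
suff r0E : r = 0 by rewrite pE r0E mul0r.
apply: IH => // s sS a am; apply: shc_dvd am.
have cop : coprimep (('X - s%:P) ^+ m s) (('X - s0%:P) ^+ m s0).
  apply/coprimep_expl/coprimep_expr/coprimep_XsubC2.
  by rewrite subr_eq0; apply: contraNneq s0S => ->.
rewrite -(Gauss_dvdpl _ cop) -pE; apply: shc_dvdP => b bm.
by apply: H => //; rewrite inE sS orbT.
Qed.


Definition pairs (S : seq F) (m : F -> nat) : seq (F * nat) :=
  [seq (s, a) | s <- S, a <- iota 0 (m s)].

Definition ment (L : seq (F * nat)) (b j : nat) : F :=
  (('X + (nth (0, 0%N) L j).1%:P) ^+ b)`_(nth (0, 0%N) L j).2.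

Definition Mmat (L : seq (F * nat)) : 'M[F]_(size L) :=
  \matrix_(b < size L, j < size L) ment L b j.

Definition ecol (d : nat) : 'cV[F]_d := \col_(b < d) ((b.+1 == d)%:R).

Definition wcol L := pinvmx (Mmat L) *m ecol (size L).

Definition vv L (j : nat) : F := \sum_(k < size L | val k == j) wcol L k 0.

Lemma vvE L (k : 'I_(size L)) : vv L k = wcol L k 0.
Proof. by rewrite /vv (big_pred1 k). Qed.

Lemma size_pairs S m : size (pairs S m) = (\sum_(s <- S) m s)%N.
Proof. by rewrite size_allpairs_dep sumnE big_map; apply: eq_bigr => s _; rewrite size_iota. Qed.

Lemma mem_pairs S m s a : ((s, a) \in pairs S m) = (s \in S) && (a < m s)%N.
Proof.
apply/allpairsPdep/andP => [[x [y [xS yI [-> ->]]]]|[sS am]].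
  by rewrite mem_iota in yI.
by exists s, a; rewrite mem_iota.
Qed.

Lemma shc_sum (p : {poly F}) s a d : (size p <= d)%N ->
  shc s a p = \sum_(b < d) p`_b * (('X + s%:P) ^+ b)`_a.
Proof.
move=> sz; rewrite /shc coef_comp_poly (big_ord_widen _ (fun b => p`_b * (('X + s%:P) ^+ b)`_a) sz).
rewrite big_mkcond /=; apply: eq_bigr => b _; case: ltnP => // pb.
by rewrite nth_default // mul0r.
Qed.

Lemma Mmat_inj S m (u : 'rV[F]_(size (pairs S m))) : uniq S ->
  u *m Mmat (pairs S m) = 0 -> u = 0.
Proof.
set L := pairs S m; move=> uS uM.
pose p : {poly F} := \sum_(b < size L) u 0 b *: 'X^b.
have coefp (b : 'I_(size L)) : p`_b = u 0 b.
  rewrite /p coef_sum (bigD1 b) //= coefZ coefXn eqxx mulr1 big1 ?addr0 //.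
  by move=> i ib; rewrite coefZ coefXn; case: eqP => [/val_inj bi|]; [by rewrite bi eqxx in ib|rewrite mulr0].
have szp : (size p <= size L)%N.
  apply: leq_trans (size_sum _ _ _) _; apply/bigmax_leqP => b _.
  by apply: leq_trans (size_scale_leq _ _) _; rewrite size_polyXn.
have p0 : p = 0.
  apply: (inj_uni (S := S) (m := m)) => //; first by rewrite -size_pairs.
  move=> s sS a am; have sL : (s, a) \in L by rewrite mem_pairs sS.
  have jL : (index (s, a) L < size L)%N by rewrite index_mem.
  have := congr1 (fun M : 'M[F]_(1, size L) => M 0 (Ordinal jL)) uM; rewrite !mxE => <-.
  rewrite (shc_sum _ _ szp); apply: eq_bigr => b _; rewrite mxE coefp /ment /=.
  by rewrite nth_index.
by apply/rowP => b; rewrite mxE -coefp p0 coef0.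
Qed.

Lemma Mmat_free S m : uniq S -> row_free (Mmat (pairs S m)).
Proof.
move=> uS; rewrite -kermx_eq0; apply/eqP/row_matrixP => i; rewrite row0.
by apply: (Mmat_inj uS); rewrite -row_mul mulmx_ker row0.
Qed.

Lemma UA S m b : uniq S -> (b.+1 < size (pairs S m))%N ->
  \sum_(j < size (pairs S m)) vv (pairs S m) j * ment (pairs S m) b j = 0.
Proof.
move=> uS bd; set L := pairs S m.
have E : Mmat L *m wcol L = ecol (size L) by rewrite /wcol mulmxA mulmxVp ?Mmat_free // mul1mx.
have := congr1 (fun M : 'M[F]_(size L, 1) => M (Ordinal (ltnW bd)) 0) E; rewrite !mxE /= (ltn_eqF bd) => H; transitivity (false%:R : F) => //; rewrite -H.
by apply: eq_bigr => j _; rewrite vvE mulrC [Mmat _ _ _]mxE.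
Qed.

Lemma uniq_pairs S m : uniq S -> uniq (pairs S m).
Proof.
move=> uS; apply: allpairs_uniq_dep => //; first by move=> x _; apply: iota_uniq.
by move=> [x1 y1] [x2 y2] _ _ /= [-> ->].
Qed.

Definition z0 : F * nat := (0, 0%N).

Lemma UB S m : uniq S -> 0 \in S -> m 0 = 1%N ->
  vv (pairs S m) (index z0 (pairs S m)) != 0.
Proof.
move=> uS S0 m0; set L := pairs S m.
have uL : uniq L by apply: uniq_pairs.
have j0L : (index z0 L < size L)%N by rewrite index_mem mem_pairs S0 m0.
set j0 := Ordinal j0L.
pose p0 : {poly F} := \prod_(s <- S | s != 0) ('X - s%:P) ^+ m s.
have mp0 : p0 \is monic by apply: monic_prod => s _; apply/monic_exp/monicXsubC.
have szp0 : size p0 = size L.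
  rewrite /p0 -big_filter size_prod_seq; last first.
    by move=> s _; rewrite -size_poly_eq0 size_exp_XsubC.
  under eq_bigr do rewrite size_exp_XsubC.
  under eq_bigr do rewrite -addn1.
  rewrite big_split /= sum1_size -addSn addnK big_filter.
  by rewrite /L size_pairs (bigD1_seq 0) //= m0.
have E : Mmat L *m wcol L = ecol (size L) by rewrite /wcol mulmxA mulmxVp ?Mmat_free // mul1mx.
pose c : 'rV[F]_(size L) := \row_(b < size L) p0`_b.
have cM (j : 'I_(size L)) : (c *m Mmat L) 0 j = if j == j0 then p0`_0 else 0.
  rewrite mxE.
  have -> : \sum_j1 c 0 j1 * Mmat L j1 j = shc (nth z0 L j).1 (nth z0 L j).2 p0.
    by rewrite (shc_sum _ _ (eq_leq szp0)); apply: eq_bigr => b _; rewrite !mxE.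
  have : nth z0 L j \in L by apply: mem_nth.
  case E2 : (nth z0 L j) => [s a]; rewrite mem_pairs => /andP [sS am] /=.
  have [s0|sn0] := eqVneq s 0.
    move: am; rewrite s0 m0 ltnS leqn0 => /eqP a0.
    have -> : j == j0.
      by rewrite -val_eqE /= -[X in X == _](index_uniq z0 (ltn_ord j) uL) E2 s0 a0.
    by rewrite /shc addr0 comp_polyXr a0.
  have -> : (j == j0) = false.
    apply/negbTE; apply: contra sn0 => /eqP jj0.
    have : nth z0 L j0 = z0 by rewrite /= nth_index // mem_pairs S0 m0.
    by rewrite -jj0 E2 => -[->].
  apply: shc_dvd am; rewrite /p0 -big_filter (bigD1_seq s) ?filter_uniq ?mem_filter ?sn0 //=.
  exact: dvdp_mulIl.
have sL0 : (0 < size L)%N := leq_ltn_trans (leq0n _) j0L.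
have lt1 : ((size L).-1 < size L)%N by rewrite prednK.
have H1 : (c *m ecol (size L)) 0 0 = 1.
  rewrite mxE (bigD1 (Ordinal lt1)) //= big1 ?addr0.
    rewrite !mxE /= prednK // eqxx mulr1 -szp0 -lead_coefE.
    exact: (monicP mp0).
  move=> i ii; rewrite !mxE.
  case: eqP => [iE|]; last by rewrite mulr0.
  by move: ii; rewrite -val_eqE /= -(congr1 predn iE) /= eqxx.
have H2 : ((c *m Mmat L) *m wcol L) 0 0 = p0`_0 * wcol L j0 0.
  rewrite mxE (bigD1 j0) //= big1 ?addr0; first by rewrite cM eqxx.
  by move=> i ii; rewrite cM (negbTE ii) mul0r.
have : p0`_0 * wcol L j0 0 = 1 by rewrite -H2 -mulmxA E H1.
have -> : vv L (index z0 L) = wcol L j0 0 by exact: (vvE j0).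
move=> H; apply/eqP => w0; move: H; rewrite w0 mulr0 => /eqP; by rewrite eq_sym oner_eq0.
Qed.

End Uni.


Section Multi.
Variables (F : fieldType) (n : nat).
Local Notation mp := {mpoly F[n]}.

Definition lowdeg (p : mp) t := forall a : 'X_{1..n}, (mdeg a < t)%N -> p@_a = 0.
Definition highdeg (p : mp) t := forall a : 'X_{1..n}, (t < mdeg a)%N -> p@_a = 0.

Lemma lowdegM p q t1 t2 : lowdeg p t1 -> lowdeg q t2 -> lowdeg (p * q) (t1 + t2).
Proof.
move=> hp hq a ha; rewrite mcoeffM big1 // => k /eqP aE.
have E := congr1 mdeg aE; rewrite mdegD in E.
have {}ha : (mdeg k.1 + mdeg k.2 < t1 + t2)%N by rewrite -E.
case: (ltnP (mdeg k.1) t1) => h1; first by rewrite hp // mul0r.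
rewrite hq ?mulr0 //; move: ha h1; move: (mdeg k.1) (mdeg k.2) => x y; lia.
Qed.

Lemma highdegM p q t1 t2 : highdeg p t1 -> highdeg q t2 -> highdeg (p * q) (t1 + t2).
Proof.
move=> hp hq a ha; rewrite mcoeffM big1 // => k /eqP aE.
have E := congr1 mdeg aE; rewrite mdegD in E.
have {}ha : (t1 + t2 < mdeg k.1 + mdeg k.2)%N by rewrite -E.
case: (ltnP t1 (mdeg k.1)) => h1; first by rewrite hp // mul0r.
rewrite hq ?mulr0 //; move: ha h1; move: (mdeg k.1) (mdeg k.2) => x y; lia.
Qed.


Definition aff (H : hyperplane F n) : mp := \sum_i H.1 ord0 i *: 'X_i - (H.2)%:MP.
Definition hval (H : hyperplane F n) (x : 'I_n -> F) : F := \sum_i H.1 ord0 i * x i - H.2.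
Definition shift (s : 'I_n -> F) : n.-tuple mp := [tuple 'X_i + (s i)%:MP | i < n].

Lemma aff_shift s H : aff H \mPo shift s = \sum_i H.1 ord0 i *: 'X_i + (hval H s)%:MP.
Proof.
rewrite /aff /hval comp_mpolyB comp_mpolyC raddf_sum /= mpolyCB raddf_sum /= addrA.
congr (_ - _); rewrite -big_split /=; apply: eq_bigr => i _.
rewrite comp_mpolyZ comp_mpolyXU -tnth_nth tnth_mktuple scalerDr; congr (_ + _).
by rewrite -mul_mpolyC -mpolyCM.
Qed.

Lemma lin_coef (c : 'I_n -> F) (a : 'X_{1..n}) : (mdeg a != 1%N) ->
  (\sum_i c i *: 'X_i : mp)@_a = 0.
Proof.
move=> a1; rewrite raddf_sum big1 // => i _; rewrite /= (mcoeffZ (c i) 'X_i a) mcoeffX.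
case: eqP => [ia|]; last by rewrite mulr0.
by move: a1; rewrite -ia mdeg1.
Qed.

Lemma aff_high H : highdeg (aff H) 1.
Proof.
move=> a ha; rewrite /aff mcoeffB lin_coef ?mcoeffC; last by rewrite neq_ltn ha orbT.
by rewrite -mdeg_eq0 gtn_eqF ?(ltn_trans _ ha) // mulr0 subrr.
Qed.

Lemma shift_low s H : hval H s = 0 -> lowdeg (aff H \mPo shift s) 1.
Proof.
move=> h0 a; rewrite ltnS leqn0 mdeg_eq0 => /eqP ->.
by rewrite aff_shift mcoeffD lin_coef ?mdeg0 // h0 mcoeffC mul0r addr0.
Qed.

Definition prodH (Hs : seq (hyperplane F n)) : mp := \prod_(H <- Hs) aff H.

Lemma prodH_high Hs : highdeg (prodH Hs) (size Hs).
Proof.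
elim: Hs => [|H Hs IH] /=.
  by move=> a ha; rewrite /prodH big_nil mcoeff1 -mdeg_eq0 gtn_eqF.
by rewrite /prodH big_cons -add1n; apply: highdegM => //; apply: aff_high.
Qed.

Lemma prodH_low Hs s : lowdeg (prodH Hs \mPo shift s) (num_containing Hs s).
Proof.
elim: Hs => [|H Hs IH] /=; first by [].
rewrite /prodH big_cons rmorphM /= /num_containing /=.
case hH : (on_hyperplane H s).
  rewrite add1n -add1n; apply: lowdegM => //; apply: shift_low; exact/eqP.
by rewrite add0n -[X in lowdeg _ X]add0n; apply: lowdegM.
Qed.

Lemma prodH_coef0 Hs s : (prodH Hs \mPo shift s)@_0 = \prod_(H <- Hs) hval H s.
Proof.
rewrite /prodH rmorph_prod /= -[mcoeff 0 _]/(mcoeff 0%MM _) rmorph_prod.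
apply: eq_bigr => H _; rewrite aff_shift -[LHS]/(mcoeff 0%MM _) mcoeffD lin_coef ?mdeg0 //.
by rewrite mcoeffC eqxx mulr1 add0r.
Qed.


Lemma expand_var (i : 'I_n) (p : {poly F}) K : (size p <= K)%N ->
  (map_poly (@mpolyC n F) p).['X_i] = \sum_(j < K) p`_j *: ('X_i : mp) ^+ j.
Proof.
move=> sz; rewrite (@horner_coef_wide _ K); last first.
  by rewrite size_map_poly.
by apply: eq_bigr => j _; rewrite coef_map /= mul_mpolyC.
Qed.

Lemma coef_prod_var (q : 'I_n -> {poly F}) K (a : 'X_{1..n}) :
  (forall i, a i < K)%N ->
  (\prod_i \sum_(j < K) (q i)`_j *: ('X_i : mp) ^+ j)@_a = \prod_i (q i)`_(a i).
Proof.
move=> aK; rewrite bigA_distr_bigA /= raddf_sum /=.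
pose f0 : {ffun 'I_n -> 'I_K} := [ffun i => Ordinal (aK i)].
rewrite (bigD1 f0) //= [X in _ + X]big1 ?addr0.
  rewrite scaler_prod mcoeffZ.
  have -> : \prod_i ('X_i : mp) ^+ f0 i = 'X_[a].
    by rewrite [RHS]mpolyXE_id; apply: eq_bigr => i _; rewrite ffunE.
  by rewrite mcoeffX eqxx mulr1; apply: eq_bigr => i _; rewrite ffunE.
move=> f ff0; rewrite scaler_prod mcoeffZ.
have -> : \prod_i ('X_i : mp) ^+ f i = 'X_[[multinom (f i : nat) | i < n]].
  by rewrite [RHS]mpolyXE_id; apply: eq_bigr => i _; rewrite mnmE.
rewrite mcoeffX; case: eqP => [fa|]; last by rewrite mulr0.
case/eqP: ff0; apply/ffunP => i; apply/val_inj; rewrite ffunE /=.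
by rewrite -fa mnmE.
Qed.

Lemma mono_shift (b a : 'X_{1..n}) s :
  ('X_[b] \mPo shift s)@_a = \prod_i (('X + (s i)%:P) ^+ (b i))`_(a i).
Proof.
pose q i := ('X + (s i)%:P) ^+ (b i).
pose K := ((\sum_i size (q i)) + mdeg a).+1.
have qK i : (size (q i) <= K)%N.
  rewrite /K ltnW // ltnS (leq_trans _ (leq_addr _ _)) // (bigD1 i) //=.
  exact: leq_addr.
have aK i : (a i < K)%N.
  by rewrite /K ltnS (leq_trans _ (leq_addl _ _)) // mdegE (bigD1 i) //= leq_addr.
rewrite -(coef_prod_var q aK) comp_mpolyX; congr mcoeff; apply: eq_bigr => i _.
rewrite tnth_mktuple -expand_var // rmorphXn /= horner_exp.
by rewrite map_polyXaddC hornerD hornerX hornerC.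
Qed.

End Multi.

End Aux.
Import Aux.

Theorem theorem5 (F : fieldType) (n : nat) (S : 'I_n -> seq F)
  (m : 'I_n -> F -> nat) (Hs : seq (hyperplane F n)) :
  (forall i, uniq (S i)) ->
  (forall i s, s \in S i -> (0 < m i s)%N) ->
  (forall i, (0 : F) \in S i) ->
  (forall i, m i 0 = 1%N) ->
  (forall H, H \in Hs -> is_hyperplane H) ->
  (forall x : 'I_n -> F, (forall i, x i \in S i) -> (exists i, x i != 0) ->
     (msum m x + 1 <= num_containing Hs x + n)%N) ->
  (forall H, H \in Hs -> ~~ on_hyperplane H (fun _ => 0)) ->
  (\sum_(i < n) dmult (S i) (m i) <= size Hs + n)%N.
Proof.
move=> uS mpos S0 m0 _ cov no0.
pose L i := pairs (S i) (m i).
have dE i : dmult (S i) (m i) = size (L i) by rewrite size_pairs.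
under eq_bigr do rewrite dE.
rewrite leqNgt; apply/negP => hlt.
pose N := (\sum_i size (L i)).+1.
have LN i : (size (L i) < N)%N.
  by rewrite ltnS (bigD1 i) //= leq_addr.
pose ww i (j : 'I_N) := if (j < size (L i))%N then vv (L i) j else 0.
pose sa i (j : nat) := nth (z0 F) (L i) j.
pose pt (f : {ffun 'I_n -> 'I_N}) := fun i => (sa i (f i)).1.
pose al (f : {ffun 'I_n -> 'I_N}) := [multinom (sa i (f i)).2 | i < n].
pose P := prodH Hs.
pose T := \sum_(f : {ffun 'I_n -> 'I_N}) (\prod_i ww i (f i)) * (P \mPo shift (pt f))@_(al f).
have E1 f : (P \mPo shift (pt f))@_(al f) =
    \sum_(b <- msupp P) P@_b * \prod_i ment (L i) (b i) (f i).
  rewrite {1}(mpolyE P) (raddf_sum (comp_mpoly (shift (pt f)))) (raddf_sum (mcoeff (al f))); apply: eq_bigr => b _.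
  rewrite /= comp_mpolyZ mcoeffZ mono_shift; congr (_ * _).
  by apply: eq_bigr => i _; rewrite mnmE.
have Z b : b \in msupp P ->
    \sum_(f : {ffun 'I_n -> 'I_N}) (\prod_i ww i (f i)) * \prod_i ment (L i) (b i) (f i) = 0.
  move=> bP.
  have hb : (mdeg b <= size Hs)%N.
    rewrite leqNgt; apply/negP => hb.
    by move: bP; rewrite mcoeff_msupp prodH_high ?eqxx.
  have [i bi] : exists i, ((b i).+1 < size (L i))%N.
    case: (boolP [exists i, ((b i).+1 < size (L i))%N]) => [/existsP //|].
    move/existsPn => H; exfalso; move: hlt; apply/negP; rewrite -leqNgt.
    apply: (@leq_trans (\sum_i (b i).+1)); first by apply: leq_sum => i _; rewrite leqNgt H.
    under eq_bigr do rewrite -add1n.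
    by rewrite big_split /= sum1_card card_ord -mdegE addnC leq_add2r.
  under eq_bigr do rewrite -big_split /=.
  rewrite -(bigA_distr_bigA (fun i j => ww i j * ment (L i) (b i) j)) /= (bigD1 i) //= [X in X * _](_ : _ = 0) ?mul0r //.
  have U := UA (b := b i) (uS i) bi.
  rewrite (big_ord_widen N (fun j => vv (L i) j * ment (L i) (b i) j) (ltnW (LN i))) big_mkcond in U.
  rewrite -[RHS]U.
  by apply: eq_bigr => j _; rewrite /ww; case: ifP => _ //; rewrite mul0r.
have TA : T = 0.
  rewrite /T; under eq_bigr do rewrite E1 big_distrr.
  rewrite exchange_big; apply: big1_seq => b /andP [_ bP].
  transitivity (P@_b * \sum_(f : {ffun 'I_n -> 'I_N}) (\prod_i ww i (f i)) * \prod_i ment (L i) (b i) (f i)).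
    by rewrite big_distrr; apply: eq_bigr => f _ /=; rewrite mulrCA.
  by rewrite Z // mulr0.
have z0L i : z0 F \in L i by rewrite mem_pairs S0 m0.
have j0N i : (index (z0 F) (L i) < N)%N.
  by apply: ltn_trans (LN i); rewrite index_mem.
have nthL i (j : nat) : (j < size (L i))%N ->
    (sa i j).1 \in S i /\ ((sa i j).2 < m i (sa i j).1)%N.
  move=> jL; have := mem_nth (z0 F) jL.
  by rewrite -/(sa i j) [sa i j]surjective_pairing mem_pairs => /andP.
pose f0 : {ffun 'I_n -> 'I_N} := [ffun i => Ordinal (j0N i)].
have sa0 i : sa i (f0 i) = z0 F by rewrite /sa ffunE /= nth_index.
have TB : T != 0.
  rewrite /T (bigD1 f0) //= [X in _ + X]big1 ?addr0.
    apply: mulf_neq0.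
      apply/prodf_neq0 => i _; rewrite /ww ffunE /= index_mem z0L.
      exact: UB.
    have -> : al f0 = 0%MM by apply/mnmP => i; rewrite mnmE mnm0E sa0.
    rewrite prodH_coef0 prodf_seq_neq0; apply/allP => H HH /=.
    have E : \sum_i H.1 ord0 i * pt f0 i = \sum_i H.1 ord0 i * 0.
      by apply: eq_bigr => i _; rewrite /pt sa0.
    by have := no0 H HH; rewrite /on_hyperplane /hval E.
  move=> f ff0.
  case: (boolP [forall i, (f i < size (L i))%N]); last first.
    move/forallPn => [i /negbTE fi].
    by rewrite (bigD1 i) //= /ww fi mul0r mul0r.
  move/forallP => fin.
  case: (boolP [exists i, pt f i != 0]).
    move/existsP => [i0 ne].
    have ptS i : pt f i \in S i by case: (nthL i (f i) (fin i)).
    have := cov (pt f) ptS (ex_intro _ i0 ne).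
    have hd : (mdeg (al f) + n <= msum m (pt f))%N.
      rewrite mdegE /msum -[X in (_ + X)%N]card_ord -sum1_card -big_split /=.
      apply: leq_sum => i _; rewrite mnmE addn1.
      by case: (nthL i (f i) (fin i)).
    move=> hc.
    rewrite (prodH_low (Hs:=Hs) (s:=pt f) (a:=al f)) ?mulr0 //.
    move: hd hc; move: (mdeg (al f)) (msum m (pt f)) (num_containing Hs (pt f)) => x y z.
    lia.
  move/existsPn => allz; exfalso; move/eqP: ff0; apply.
  apply/ffunP => i; apply/val_inj; rewrite ffunE /=.
  have [_] := nthL i (f i) (fin i).
  have p0 : (sa i (f i)).1 = 0 by apply/eqP; have := allz i; rewrite negbK.
  rewrite p0 m0 ltnS leqn0 => /eqP a0.
  have -> : z0 F = sa i (f i) by rewrite [sa i (f i)]surjective_pairing p0 a0.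
  by rewrite index_uniq // uniq_pairs.
by rewrite TA eqxx in TB.
Qed.
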